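(* Let $I$ be a monomial ideal of a polynomial ring $Q=\Bbbk[x_1,\ldots,x_n]$, let $\mathbb{T}$ be the Taylor resolution of $Q/I$ (with respect to a fixed total order on $G(I)$), equipped with Gemeda's dg algebra structure, and let $A$ be a Morse matching on the Taylor graph of $I$. Suppose that $A_+$ is closed under taking supersets, i.e., if $V\in A_+$ and $V\subseteq W\subseteq G(I)$ then $W\in A_+$. Then the subcomplex $\mathbb{J}$ induced by $A$ is a dg ideal of $\mathbb{T}$ (i.e., $\mathbb{T}\mathbb{J}\subseteq\mathbb{J}$), and consequently $\mathbb{T}/\mathbb{J}$ admits the structure of a differential graded algebra.
   Context: Let $G(I)$ denote the set of minimal monomial generators of $I$, with a fixed total order $<$. For $U\subseteq G(I)$ put $m_U=\mathrm{lcm}\{u: u\in U\}$ ($m_\emptyset=1$). The Taylor resolution $\mathbb{T}$ of $Q/I$ has $\mathbb{T}_i$ free with basis $\{e_U: U\subseteq G(I), |U|=i\}$ and differential $\partial(e_U)=\sum_{u\in U}(-1)^{\sigma(u,U)}\frac{m_U}{m_{U\setminus\{u\}}}e_{U\setminus\{u\}}$, where $\sigma(u,U)=|\{v\in U: v<u\}|$. Gemeda's product: $e_V\cdot e_W=(-1)^{\sigma(V,W)}\frac{m_Vm_W}{m_{V\cup W}}e_{V\cup W}$ if $V\cap W=\emptyset$ and $0$ otherwise, where $\sigma(V,W)=|\{(v,w)\in V\times W: v>w\}|$; this makes $\mathbb{T}$ a dg algebra (graded-commutative, associative, unital, squares of odd elements zero, Leibniz rule $\partial(ab)=\partial(a)b+(-1)^{|a|}a\partial(b)$).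 The Taylor graph of $I$ is the directed graph whose vertices are the subsets of $G(I)$, with an edge $\sigma\to\tau$ iff $\tau\subseteq\sigma$, $|\tau|=|\sigma|-1$, $m_\sigma=m_\tau$ and $|\tau|\ge 2$. A Morse matching is a set $A$ of edges of the Taylor graph, no two sharing a vertex, such that reversing the edges of $A$ yields an acyclic directed graph; $A_+$ is the set of sources and $A_-$ the set of targets of edges in $A$. The subcomplex induced by $A$ is $\mathbb{J}=\bigoplus_{V\in A_+}(Qe_V\oplus Q\partial(e_V))$, i.e., the subcomplex spanned by $e_V$ and $\partial(e_V)$ for $V\in A_+$. A subcomplex $\mathbb{J}$ of a dg algebra $\mathbb{F}$ is a dg ideal if $\mathbb{F}\mathbb{J}\subseteq\mathbb{J}$. *)

(* Defs.v *)
From HB Require Import structures.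
From mathcomp Require Import all_boot all_order all_algebra.
From mathcomp Require Import fingraph.
From mathcomp.multinomials Require Import mpoly.

Set Implicit Arguments.
Unset Strict Implicit.
Unset Printing Implicit Defensive.

Import GRing.Theory.
Local Open Scope ring_scope.

(* The minimal generating set G(I) with its fixed total order is encoded as
   an injective family g : 'I_m -> 'X_{1..n} of monomials (exponent vectors),
   the total order on G(I) being the order of the indices in 'I_m. *)

Section Taylor.
Variables (R : fieldType) (n m : nat) (g : 'I_m -> 'X_{1..n}).

Definition mdiv (a b : 'X_{1..n}) : bool := [forall j : 'I_n, a j <= b j]%N.

Definition minimal_gens : Prop :=
  forall i j : 'I_m, i != j -> ~~ mdiv (g i) (g j).

(* m_U = lcm {g u : u in U}, m_emptyset = 1 (exponent vector) *)
Definition mlcm (U : {set 'I_m}) : 'X_{1..n} :=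
  [multinom (\max_(u in U) g u j)%N | j < n].

(* The Taylor module T = (+)_{U} Q e_U, elements stored by coefficients. *)
Definition Tay := {ffun {set 'I_m} -> {mpoly R[n]}}.

Definition tscale (c : {mpoly R[n]}) (x : Tay) : Tay := [ffun U => c * x U].

Definition tbasis (U : {set 'I_m}) : Tay := [ffun V => (V == U)%:R].

(* the monomial m_U / m_V, for V a subset of U *)
Definition mquo (U V : {set 'I_m}) : {mpoly R[n]} :=
  'X_[ [multinom (mlcm U j - mlcm V j)%N | j < n] ].

Definition sgn_pos (u : 'I_m) (U : {set 'I_m}) : nat := #|[set v in U | (val v < val u)%N]|.

Definition dbasis (U : {set 'I_m}) : Tay :=
  \sum_(u in U) tscale ((-1) ^+ sgn_pos u U * mquo U (U :\ u)) (tbasis (U :\ u)).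

Definition tdiff (x : Tay) : Tay := \sum_(U : {set 'I_m}) tscale (x U) (dbasis U).

Definition sgn_pair (V W : {set 'I_m}) : nat :=
  #|[set p in setX V W | (val p.2 < val p.1)%N]|.

Definition eprod (V W : {set 'I_m}) : Tay :=
  if [disjoint V & W] then
    tscale ((-1) ^+ sgn_pair V W *
            'X_[ [multinom (mlcm V j + mlcm W j - mlcm (V :|: W) j)%N | j < n] ])
           (tbasis (V :|: W))
  else 0.

Definition tmul (a b : Tay) : Tay :=
  \sum_(V : {set 'I_m}) \sum_(W : {set 'I_m}) tscale (a V * b W) (eprod V W).

Definition taylor_edge (s t : {set 'I_m}) : bool :=
  [&& t \subset s, #|t| == #|s|.-1, mlcm s == mlcm t & (2 <= #|t|)%N].

(* A Morse matching: a set of edges of the Taylor graph, pairwise vertex-disjoint,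
   such that reversing the edges of A gives an acyclic directed graph. *)
Definition reversed_rel (A : {set {set 'I_m} * {set 'I_m}}) : rel {set 'I_m} :=
  fun x y => (taylor_edge x y && ((x, y) \notin A)) || ((y, x) \in A).

Definition acyclic_rel (T : finType) (e : rel T) : Prop :=
  forall x y : T, e x y -> ~~ connect e y x.

Definition morse_matching (A : {set {set 'I_m} * {set 'I_m}}) : Prop :=
  [/\ forall p, p \in A -> taylor_edge p.1 p.2,
      forall p q, p \in A -> q \in A -> p != q ->
        [disjoint [set p.1; p.2] & [set q.1; q.2]]
    & acyclic_rel (reversed_rel A)].

Definition Aplus (A : {set {set 'I_m} * {set 'I_m}}) : {set {set 'I_m}} :=
  [set p.1 | p in A].

Definition inJ (A : {set {set 'I_m} * {set 'I_m}}) (x : Tay) : Prop :=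
  exists c d : {set 'I_m} -> {mpoly R[n]},
    x = \sum_(V in Aplus A) (tscale (c V) (tbasis V) + tscale (d V) (tdiff (tbasis V))).

End Taylor.

(* Main.v *)
Require Import Defs.
From HB Require Import structures.
From mathcomp Require Import all_boot all_order all_algebra.
From mathcomp.multinomials Require Import mpoly.
From mathcomp Require Import zify ring.
Require Import Defs.

Set Implicit Arguments.
Unset Strict Implicit.
Unset Printing Implicit Defensive.

Section Comb.
Variable m : nat.
Implicit Types (U V W X Y : {set 'I_m}) (u v w : 'I_m).

Definition upc w V := #|[set v in V | (val w < val v)%N]|.

Lemma sgn_posD1 u v U :
  sgn_pos v U = ((u \in U) && (val u < val v)%N) + sgn_pos v (U :\ u).
Proof.
rewrite /sgn_pos (cardsD1 u [set w in U | _]) inE; congr (_ + _).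
by apply: eq_card => w; rewrite !inE andbA.
Qed.

Lemma sgn_posDself v U : sgn_pos v (U :\ v) = sgn_pos v U.
Proof. by rewrite (sgn_posD1 v v U) ltnn andbF. Qed.

Lemma sgn_posU v X Y : [disjoint X & Y] ->
  sgn_pos v (X :|: Y) = sgn_pos v X + sgn_pos v Y.
Proof.
move=> dXY; rewrite /sgn_pos.
have -> : [set w in X :|: Y | (val w < val v)%N] =
  [set w in X | (val w < val v)%N] :|: [set w in Y | (val w < val v)%N].
  by apply/setP => w; rewrite !inE andb_orl.
rewrite cardsU; have -> : [set w in X | (val w < val v)%N] :&: [set w in Y | (val w < val v)%N] = set0.
  apply/setP => w; rewrite !inE; apply/negbTE.
  case: (boolP (w \in X)) => hX //=; case: (boolP (w \in Y)) => hY //=.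
  by move: dXY; rewrite disjoint_subset => /subsetP /(_ w hX); rewrite inE hY.
  by rewrite andbF.
by rewrite cards0 subn0.
Qed.

Lemma sgn_pairD1l v V W : v \in V ->
  sgn_pair V W = sgn_pos v W + sgn_pair (V :\ v) W.
Proof.
move=> hv; rewrite /sgn_pair -(cardsID [set p : 'I_m * 'I_m | p.1 == v]).
congr (_ + _).
  have inj : injective (fun b : 'I_m => (v, b)) by move=> a b [].
  rewrite /sgn_pos -(card_imset _ inj).
  apply: eq_card => [[a b]]; rewrite !inE /=.
  apply/andP/imsetP.
    case=> /andP[/andP[ha hb] hlt] /eqP eav; subst a.
    by exists b => //; rewrite inE hb.
  case=> c; rewrite inE => /andP[hc hlt] [-> ->].
  by rewrite hv hc hlt eqxx.
apply: eq_card => [[a b]]; rewrite !inE /=.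
by case: (a == v); rewrite ?andbF //= andbT.
Qed.

Lemma sgn_pairD1r w V W : w \in W ->
  sgn_pair V W = upc w V + sgn_pair V (W :\ w).
Proof.
move=> hw; rewrite /sgn_pair -(cardsID [set p : 'I_m * 'I_m | p.2 == w]).
congr (_ + _).
  have inj : injective (fun a : 'I_m => (a, w)) by move=> a b [].
  rewrite /upc -(card_imset _ inj).
  apply: eq_card => [[a b]]; rewrite !inE /=.
  apply/andP/imsetP.
    case=> /andP[/andP[ha hb] hlt] /eqP ebw; subst b.
    by exists a => //; rewrite inE ha.
  case=> c; rewrite inE => /andP[hc hlt] [-> ->].
  by rewrite hw hc hlt eqxx.
apply: eq_card => [[a b]]; rewrite !inE /=.
by case: (b == w); rewrite ?andbF //= andbT.
Qed.

Lemma upc_sgn w V : w \notin V -> upc w V + sgn_pos w V = #|V|.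
Proof.
move=> hw; rewrite /upc /sgn_pos -(cardsID [set v : 'I_m | (val w < val v)%N] V).
congr (_ + _); apply: eq_card => x; rewrite !inE //.
case: (boolP (x \in V)) => hx /=; last by rewrite ?andbF.
rewrite ?andbT -leqNgt ltn_neqAle.
have -> // : (val x != val w) by apply: contra hw => /eqP/val_inj <-.
Qed.

Variables (n : nat) (g : 'I_m -> 'X_{1..n}).

Lemma mlcmE U j : mlcm g U j = (\max_(u in U) g u j)%N.
Proof. by rewrite /mlcm mnmE. Qed.

Lemma mlcmU X Y j : mlcm g (X :|: Y) j = maxn (mlcm g X j) (mlcm g Y j).
Proof.
rewrite !mlcmE; apply/eqP; rewrite eqn_leq; apply/andP; split.
  apply/bigmax_leqP => i; rewrite inE => /orP[] hi.
    by apply: leq_trans (leq_maxl _ _); apply: leq_bigmax_cond.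
  by apply: leq_trans (leq_maxr _ _); apply: leq_bigmax_cond.
rewrite geq_max; apply/andP; split; apply/bigmax_leqP => i hi;
  by apply: leq_bigmax_cond; rewrite inE hi ?orbT.
Qed.

Lemma mlcm_sub X Y j : X \subset Y -> (mlcm g X j <= mlcm g Y j)%N.
Proof. by move/setUidPr => <-; rewrite mlcmU leq_maxl. Qed.

End Comb.

Import GRing.Theory.
Local Open Scope ring_scope.

Lemma antisym_sum (M : zmodType) m (U : {set 'I_m}) (F : 'I_m -> 'I_m -> M) :
  (forall u v, u \in U -> v \in U -> u != v -> F u v + F v u = 0) ->
  \sum_(u in U) \sum_(v in U :\ u) F u v = 0.
Proof.
move=> hF.
pose G u v := if [&& u \in U, v \in U & u != v] then F u v else 0.
have e1 : \sum_(u in U) \sum_(v in U :\ u) F u v = \sum_u \sum_v G u v.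
  rewrite big_mkcond; apply: eq_bigr => u _.
  case: (boolP (u \in U)) => hu.
    rewrite big_mkcond; apply: eq_bigr => v _; rewrite /G !inE hu /= eq_sym.
    by case: (v \in U); rewrite ?andbF ?andbT.
  by rewrite big1 // => v _; rewrite /G (negbTE hu).
have e2 : forall u v, G u v = (if (val u < val v)%N then G u v else 0)
                             + (if (val v < val u)%N then G u v else 0).
  move=> u v; case: (ltngtP (val u) (val v)) => h; rewrite ?addr0 ?add0r //.
  by rewrite /G (_ : u != v = false) ?andbF //; apply/negbF/eqP/val_inj.
rewrite e1 (eq_bigr _ (fun u _ => eq_bigr _ (fun v _ => e2 u v))).
rewrite (eq_bigr _ (fun u _ => big_split _ _ _ _ _)) big_split /=.
rewrite [X in _ + X]exchange_big /= -big_split /= big1 // => u _.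
rewrite -big_split big1 //= => v _.
case: ifP => h; last by rewrite addr0.
rewrite /G.
have nuv : u != v by apply/eqP => e; rewrite e ltnn in h.
case: (boolP (u \in U)) => hu; case: (boolP (v \in U)) => hv; rewrite /= ?addr0 //.
by rewrite nuv eq_sym nuv hF.
Qed.

Section Work.
Variables (R : fieldType) (n m : nat) (g : 'I_m -> 'X_{1..n}).
Local Notation T := (Tay R n m).
Local Notation P := {mpoly R[n]}.
Local Notation S := {set 'I_m}.
Local Notation tb := (tbasis R n).
Local Notation db := (dbasis R g).
Local Notation ep := (eprod R g).
Local Notation mq := (mquo R g).
Implicit Types (U V W : {set 'I_m}).

Lemma tscaleDr (c : P) (x y : T) : tscale c (x + y) = tscale c x + tscale c y.
Proof. by apply/ffunP => U; rewrite !ffunE mulrDr. Qed.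
Lemma tscaleDl (c d : P) (x : T) : tscale (c + d) x = tscale c x + tscale d x.
Proof. by apply/ffunP => U; rewrite !ffunE mulrDl. Qed.
Lemma tscale0r (c : P) : tscale c (0 : T) = 0.
Proof. by apply/ffunP => U; rewrite !ffunE mulr0. Qed.
Lemma tscale0l (x : T) : tscale 0 x = 0.
Proof. by apply/ffunP => U; rewrite !ffunE mul0r. Qed.
Lemma tscale1 (x : T) : tscale 1 x = x.
Proof. by apply/ffunP => U; rewrite !ffunE mul1r. Qed.
Lemma tscaleA (c d : P) (x : T) : tscale c (tscale d x) = tscale (c * d) x.
Proof. by apply/ffunP => U; rewrite !ffunE mulrA. Qed.
Lemma tscaleN (c : P) (x : T) : tscale (- c) x = - tscale c x.
Proof. by apply/ffunP => U; rewrite !ffunE mulNr. Qed.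
Lemma tscaleNr (c : P) (x : T) : tscale c (- x) = - tscale c x.
Proof. by apply/ffunP => U; rewrite !ffunE mulrN. Qed.
Lemma tscale_sumr (c : P) I (r : seq I) (Q : pred I) (F : I -> T) :
  tscale c (\sum_(i <- r | Q i) F i) = \sum_(i <- r | Q i) tscale c (F i).
Proof.
apply/ffunP => U; rewrite !ffunE !sum_ffunE mulr_sumr.
by apply: eq_bigr => i _; rewrite ffunE.
Qed.
Lemma tscale_suml I (r : seq I) (Q : pred I) (F : I -> P) (x : T) :
  tscale (\sum_(i <- r | Q i) F i) x = \sum_(i <- r | Q i) tscale (F i) x.
Proof.
apply/ffunP => U; rewrite !ffunE !sum_ffunE mulr_suml.
by apply: eq_bigr => i _; rewrite ffunE.
Qed.

Lemma decomp (x : T) : x = \sum_U tscale (x U) (tb U).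
Proof.
apply/ffunP => V; rewrite sum_ffunE (bigD1 V) //= big1 ?addr0.
  by rewrite !ffunE eqxx mulr1.
by move=> U /negPf hU; rewrite !ffunE eq_sym hU mulr0.
Qed.

Lemma tdiffD (x y : T) : tdiff g (x + y) = tdiff g x + tdiff g y.
Proof. by rewrite /tdiff -big_split; apply: eq_bigr => U _; rewrite ffunE tscaleDl. Qed.
Lemma tdiff0 : tdiff g (0 : T) = 0.
Proof. by rewrite /tdiff big1 // => U _; rewrite ffunE tscale0l. Qed.
Lemma tdiffN (x : T) : tdiff g (- x) = - tdiff g x.
Proof. by apply/eqP; rewrite -subr_eq0 opprK -tdiffD addNr tdiff0. Qed.
Lemma tdiffB (x y : T) : tdiff g (x - y) = tdiff g x - tdiff g y.
Proof. by rewrite tdiffD tdiffN. Qed.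
Lemma tdiffZ (c : P) (x : T) : tdiff g (tscale c x) = tscale c (tdiff g x).
Proof.
rewrite /tdiff tscale_sumr; apply: eq_bigr => U _; by rewrite ffunE tscaleA.
Qed.
Lemma tdiff_sum I (r : seq I) (Q : pred I) (F : I -> T) :
  tdiff g (\sum_(i <- r | Q i) F i) = \sum_(i <- r | Q i) tdiff g (F i).
Proof. exact: (big_morph _ tdiffD tdiff0). Qed.
Lemma tdiff_basis U : tdiff g (tb U) = db U.
Proof.
rewrite /tdiff (bigD1 U) //= big1 ?addr0.
  by rewrite ffunE eqxx tscale1.
by move=> V /negPf hV; rewrite ffunE hV tscale0l.
Qed.

Lemma tmulDl (x y z : T) : tmul g (x + y) z = tmul g x z + tmul g y z.
Proof.
rewrite /tmul -big_split; apply: eq_bigr => V _; rewrite -big_split.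
by apply: eq_bigr => W _; rewrite ffunE mulrDl tscaleDl.
Qed.
Lemma tmulDr (x y z : T) : tmul g z (x + y) = tmul g z x + tmul g z y.
Proof.
rewrite /tmul -big_split; apply: eq_bigr => V _; rewrite -big_split.
by apply: eq_bigr => W _; rewrite ffunE mulrDr tscaleDl.
Qed.
Lemma tmul0l (x : T) : tmul g 0 x = 0.
Proof. by rewrite /tmul big1 // => V _; rewrite big1 // => W _; rewrite ffunE mul0r tscale0l. Qed.
Lemma tmul0r (x : T) : tmul g x 0 = 0.
Proof. by rewrite /tmul big1 // => V _; rewrite big1 // => W _; rewrite ffunE mulr0 tscale0l. Qed.
Lemma tmulZl (c : P) (x y : T) : tmul g (tscale c x) y = tscale c (tmul g x y).
Proof.
rewrite /tmul tscale_sumr; apply: eq_bigr => V _; rewrite tscale_sumr.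
by apply: eq_bigr => W _; rewrite ffunE tscaleA mulrA.
Qed.
Lemma tmulZr (c : P) (x y : T) : tmul g x (tscale c y) = tscale c (tmul g x y).
Proof.
rewrite /tmul tscale_sumr; apply: eq_bigr => V _; rewrite tscale_sumr.
by apply: eq_bigr => W _; rewrite ffunE tscaleA mulrCA.
Qed.
Lemma tmul_suml I (r : seq I) (Q : pred I) (F : I -> T) y :
  tmul g (\sum_(i <- r | Q i) F i) y = \sum_(i <- r | Q i) tmul g (F i) y.
Proof. exact: (big_morph (fun x => tmul g x y) (fun a b => tmulDl a b y) (tmul0l y)). Qed.
Lemma tmul_sumr I (r : seq I) (Q : pred I) (F : I -> T) y :
  tmul g y (\sum_(i <- r | Q i) F i) = \sum_(i <- r | Q i) tmul g y (F i).
Proof. exact: (big_morph (fun x => tmul g y x) (fun a b => tmulDr a b y) (tmul0r y)). Qed.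
Lemma tmul_basisl V (y : T) : tmul g (tb V) y = \sum_W tscale (y W) (ep V W).
Proof.
rewrite /tmul (bigD1 V) //= [X in _ + X]big1 ?addr0.
  by apply: eq_bigr => W _; rewrite ffunE eqxx mul1r.
by move=> U /negPf hU; rewrite big1 // => W _; rewrite ffunE hU mul0r tscale0l.
Qed.
Lemma tmul_basisr W (x : T) : tmul g x (tb W) = \sum_V tscale (x V) (ep V W).
Proof.
rewrite /tmul; apply: eq_bigr => V _; rewrite (bigD1 W) //= [X in _ + X]big1 ?addr0.
  by rewrite ffunE eqxx mulr1.
by move=> U /negPf hU; rewrite ffunE hU mulr0 tscale0l.
Qed.
Lemma tmul_basis V W : tmul g (tb V) (tb W) = ep V W.
Proof.
rewrite tmul_basisl (bigD1 W) //= [X in _ + X]big1 ?addr0.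
  by rewrite ffunE eqxx tscale1.
by move=> U /negPf hU; rewrite ffunE hU tscale0l.
Qed.

Lemma Xmul (a b c : 'X_{1..n}) : (forall j, a j + b j = c j)%N -> 'X_[a] * 'X_[b] = 'X_[c] :> P.
Proof. by move=> h; rewrite -mpolyXD; congr 'X_[_]; apply/mnmP => j; rewrite mnmDE. Qed.

Lemma mq_mul U V W : W \subset V -> V \subset U -> mq U V * mq V W = mq U W.
Proof.
move=> hWV hVU; rewrite /mquo; apply: Xmul => j; rewrite !mnmE.
have := mlcm_sub g j hWV; have := mlcm_sub g j hVU; rewrite !mlcmE; lia.
Qed.

Lemma ddb U : tdiff g (db U) = 0.
Proof.
pose F u v := tscale ((-1)^+(sgn_pos u U + sgn_pos v (U :\ u)) * mq U (U :\ u :\ v)) (tb (U :\ u :\ v)).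
rewrite /dbasis tdiff_sum.
transitivity (\sum_(u in U) \sum_(v in U :\ u) F u v).
  apply: eq_bigr => u hu; rewrite tdiffZ tdiff_basis /dbasis tscale_sumr.
  apply: eq_bigr => v hv; rewrite tscaleA /F; congr tscale.
  by rewrite mulrACA -exprD mq_mul // subD1set.
apply: antisym_sum => u v hu hv nuv; rewrite /F.
have eS : U :\ v :\ u = U :\ u :\ v by rewrite !setDDl setUC.
rewrite eS -tscaleDl -mulrDl.
rewrite (sgn_posD1 v u U) (sgn_posD1 u v U) hu hv /=.
suff -> : (-1) ^+ ((val v < val u)%N + sgn_pos u (U :\ v) + sgn_pos v (U :\ u)) +
  (-1) ^+ ((val u < val v)%N + sgn_pos v (U :\ u) + sgn_pos u (U :\ v)) = 0 :> P.
  by rewrite mul0r tscale0l.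
case: (ltngtP (val u) (val v)) => h /=; rewrite !exprD ?expr0 ?expr1; try ring.
by case/eqP: nuv; apply: val_inj.
Qed.


Lemma odd_eq2 a b k : a = (b + (k + k))%N -> odd a = odd b.
Proof. by move->; rewrite oddD addnn odd_double addbF. Qed.




Lemma coef_eq (a b k c d : nat) (p q r s : 'X_{1..n}) :
  odd (a + b) = odd (k + c + d) ->
  (forall j, p j + q j = r j + s j)%N ->
  ((-1)^+a * 'X_[p]) * ((-1)^+b * 'X_[q]) =
  (-1)^+k * (((-1)^+c * 'X_[r]) * ((-1)^+d * 'X_[s])) :> P.
Proof.
move=> ho hm.
transitivity ((-1)^+(a + b) * 'X_[p + q] : P); first by rewrite exprD mpolyXD; ring.
transitivity ((-1)^+(k + c + d) * 'X_[r + s] : P); last by rewrite !exprD mpolyXD; ring.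
rewrite -signr_odd ho signr_odd.
congr (_ * 'X_[_]); apply/mnmP => j; rewrite !mnmDE; exact: hm.
Qed.
Lemma coef_eq0 (a b c d : nat) (p q r s : 'X_{1..n}) :
  odd (a + b) = odd (c + d) ->
  (forall j, p j + q j = r j + s j)%N ->
  ((-1)^+a * 'X_[p]) * ((-1)^+b * 'X_[q]) =
  ((-1)^+c * 'X_[r]) * ((-1)^+d * 'X_[s]) :> P.
Proof.
move=> ho hm; have := @coef_eq a b 0 c d p q r s; rewrite expr0 mul1r add0n; exact.
Qed.

Lemma setD1_id v W : v \notin W -> W :\ v = W.
Proof. by move=> hv; apply/setP => x; rewrite !inE; case: eqP => // ->; rewrite (negbTE hv). Qed.

Lemma epE V W : [disjoint V & W] -> ep V W =
  tscale ((-1) ^+ sgn_pair V W *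
     'X_[ [multinom (mlcm g V j + mlcm g W j - mlcm g (V :|: W) j)%N | j < n] ])
    (tb (V :|: W)).
Proof. by move=> h; rewrite /eprod h. Qed.

Lemma ep0 V W : ~~ [disjoint V & W] -> ep V W = 0.
Proof. by move=> h; rewrite /eprod (negbTE h). Qed.

Lemma single_inter V W v : ~~ [disjoint V & W] -> [disjoint V :\ v & W] ->
  V :&: W = [set v].
Proof.
move=> nd d; move: nd; rewrite -setI_eq0 => /set0Pn [y hy].
move: d; rewrite -setI_eq0 => /eqP d.
have hx x : x \in V -> x \in W -> x = v.
  move=> xV xW; apply/eqP; apply/negPn/negP => xv.
  by have := in_set0 x; rewrite -d !inE xv xV xW.
apply/setP => x; rewrite !inE; case: eqP => [->|xv].
  by move: hy; rewrite inE => /andP[yV yW]; rewrite -(hx y yV yW) yV yW.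
by apply/negbTE/negP => /andP[xV xW]; apply: xv; apply: hx.
Qed.

Lemma sum_single V W (f : 'I_m -> T) : ~~ [disjoint V & W] ->
  (forall v, v \in V -> ~~ [disjoint V :\ v & W] -> f v = 0) ->
  \sum_(v in V) f v = \sum_(v | V :&: W == [set v]) f v.
Proof.
move=> nd hf; rewrite big_mkcond [RHS]big_mkcond; apply: eq_bigr => v _.
case: eqP => [e|ne].
  have : v \in V :&: W by rewrite e set11.
  by rewrite inE => /andP[-> _].
case: (boolP (v \in V)) => hv //; apply: hf => //; apply/negP => d.
by apply: ne; apply: single_inter.
Qed.

Lemma sum_single2 V W (f : 'I_m -> T) : ~~ [disjoint V & W] ->
  (forall w, w \in W -> ~~ [disjoint V & W :\ w] -> f w = 0) ->
  \sum_(w in W) f w = \sum_(w | V :&: W == [set w]) f w.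
Proof.
move=> nd hf; rewrite (sum_single (W := V)).
- by apply: eq_bigl => w; rewrite setIC.
- by rewrite disjoint_sym.
- by move=> w hw h; apply: hf; rewrite // disjoint_sym.
Qed.

Lemma sumU_disj V W (F : 'I_m -> T) : [disjoint V & W] ->
  \sum_(i in V :|: W) F i = \sum_(i in V) F i + \sum_(i in W) F i.
Proof.
move=> d; rewrite -bigU //; apply: eq_bigl => x; by rewrite !inE.
Qed.

Lemma leib V W : tdiff g (ep V W) =
  tmul g (db V) (tb W) + tscale ((-1) ^+ #|V|) (tmul g (tb V) (db W)).
Proof.
rewrite /dbasis tmul_suml tmul_sumr tscale_sumr.
under eq_bigr => v _ do rewrite tmulZl tmul_basis.
under [X in _ + X]eq_bigr => w _ do rewrite tmulZr tmul_basis tscaleA.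
case: (boolP [disjoint V & W]) => dVW; last first.
  rewrite ep0 // tdiff0.
  rewrite (sum_single dVW); last by move=> v _ h; rewrite ep0 // tscale0r.
  rewrite (sum_single2 dVW); last by move=> w _ h; rewrite ep0 // tscale0r.
  rewrite -big_split /= big1 // => u /eqP hu.
  have uVW : u \in V :&: W by rewrite hu set11.
  have uV : u \in V by move: uVW; rewrite inE => /andP[].
  have uW : u \in W by move: uVW; rewrite inE => /andP[].
  have d1 : [disjoint V :\ u & W].
    rewrite -setI_eq0; apply/eqP/setP => x; rewrite !inE.
    case: eqP => // xu /=; apply/negbTE/negP => /andP[xV xW]; apply: xu.
    by apply/set1P; rewrite -hu inE xV xW.
  have d2 : [disjoint V & W :\ u].
    rewrite -setI_eq0; apply/eqP/setP => x; rewrite !inE.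
    case: eqP => // xu /=; rewrite ?andbF //; apply/negbTE/negP => /andP[xV xW]; apply: xu.
    by apply/set1P; rewrite -hu inE xV xW.
  have e1 : V :\ u :|: W = V :|: W.
    by apply/setP => x; rewrite !inE; case: (x =P u) => [->|] /=; rewrite ?uW ?uV ?orbT.
  have e2 : V :|: W :\ u = V :|: W.
    by apply/setP => x; rewrite !inE; case: (x =P u) => [->|] /=; rewrite ?uW ?uV ?orbT.
  rewrite (epE d1) (epE d2) !tscaleA e1 e2 -tscaleDl.
  have key : forall (x y : P) (z : T), x = - y -> tscale (x + y) z = 0.
    by move=> x y z ->; rewrite addNr tscale0l.
  apply: key.
  have hneg : forall (k : nat) (y : P), - ((-1)^+k * y) = (-1)^+k.+1 * y.
    by move=> k y; rewrite exprS mulN1r mulNr.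
  rewrite /mquo -mulrA hneg.
  apply: coef_eq.
    apply/esym; apply: (@odd_eq2 _ _ (sgn_pos u W).+1).
    rewrite (sgn_pairD1l _ uV) -(sgn_posDself u W) (sgn_pairD1r _ (W := W) uW).
    rewrite -(sgn_posDself u V) (cardsD1 u V) uV.
    have := upc_sgn (negbT (setD11 u V)); rewrite add1n; set s1 := sgn_pos u (W :\ u); set s2 := sgn_pos u (V :\ u); set s3 := upc u (V :\ u); set s4 := sgn_pair (V :\ u) (W :\ u); set s5 := #|V :\ u|; clearbody s1 s2 s3 s4 s5; lia.
  move=> j; rewrite !mnmE.
  have := mlcmU g (V :\ u) W j; rewrite e1 => h1.
  have := mlcmU g V (W :\ u) j; rewrite e2 => h2.
  have := mlcm_sub g j (subD1set V u); have := mlcm_sub g j (subD1set W u).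
  move: h1 h2; rewrite !mnmE -!mlcmE.
  set x1 := mlcm g V j; set x2 := mlcm g W j; set x3 := mlcm g (V :\ u) j; set x4 := mlcm g (W :\ u) j; set x5 := mlcm g (V :|: W) j.
  clearbody x1 x2 x3 x4 x5; lia.
rewrite (epE dVW) tdiffZ tdiff_basis /dbasis tscale_sumr.
rewrite sumU_disj //; congr (_ + _); apply: eq_bigr => x hx.
- have xW : x \notin W by rewrite (disjointFr dVW hx).
  have dx : [disjoint V :\ x & W] by exact: disjointWl (subD1set V x) dVW.
  have eS : (V :|: W) :\ x = V :\ x :|: W by rewrite setDUl (setD1_id xW).
  rewrite (epE dx) !tscaleA eS; congr tscale.
  rewrite /mquo; apply: coef_eq0.
    rewrite (sgn_pairD1l _ hx) (sgn_posU x dVW).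
    apply: (@odd_eq2 _ _ (sgn_pos x W)).
    set y1 := sgn_pos x W; set y2 := sgn_pos x V; set y3 := sgn_pair (V :\ x) W.
    clearbody y1 y2 y3; lia.
  move=> j; rewrite !mnmE -!mlcmE.
  have := mlcmU g V W j; have := mlcmU g (V :\ x) W j; have := mlcm_sub g j (subD1set V x).
  set x1 := mlcm g V j; set x2 := mlcm g W j; set x3 := mlcm g (V :\ x) j; set x4 := mlcm g (V :\ x :|: W) j; set x5 := mlcm g (V :|: W) j.
  clearbody x1 x2 x3 x4 x5; lia.
- have xV : x \notin V by rewrite (disjointFl dVW hx).
  have dx : [disjoint V & W :\ x] 
    by rewrite disjoint_sym; apply: disjointWl (subD1set W x) _; rewrite disjoint_sym.
  have eS : (V :|: W) :\ x = V :|: W :\ x by rewrite setDUl (setD1_id xV).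
  rewrite (epE dx) !tscaleA eS; congr tscale.
  rewrite /mquo -[RHS]mulrA; apply: coef_eq.
    rewrite (sgn_pairD1r _ (W := W) hx) (sgn_posU x dVW).
    have := upc_sgn xV.
    set y1 := sgn_pos x W; set y2 := sgn_pos x V; set y3 := sgn_pair V (W :\ x); set y4 := upc x V; set y5 := #|V|.
    clearbody y1 y2 y3 y4 y5; move=> h; congr (odd _); lia.
  move=> j; rewrite !mnmE -!mlcmE.
  have := mlcmU g V W j; have := mlcmU g V (W :\ x) j; have := mlcm_sub g j (subD1set W x).
  set x1 := mlcm g V j; set x2 := mlcm g W j; set x3 := mlcm g (W :\ x) j; set x4 := mlcm g (V :|: W :\ x) j; set x5 := mlcm g (V :|: W) j.
  clearbody x1 x2 x3 x4 x5; lia.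
Qed.




Section Ideal.
Variable (A : {set {set 'I_m} * {set 'I_m}}).
Hypothesis up : forall V W : {set 'I_m}, V \in Aplus A -> V \subset W -> W \in Aplus A.
Local Notation J := (@inJ R n m g A).

Lemma inJ0 : J 0.
Proof.
exists (fun _ => 0), (fun _ => 0); rewrite big1 // => V _.
by rewrite !tscale0l addr0.
Qed.

Lemma inJD x y : J x -> J y -> J (x + y).
Proof.
move=> [c1 [d1 ->]] [c2 [d2 ->]].
exists (fun V => c1 V + c2 V), (fun V => d1 V + d2 V).
rewrite -big_split; apply: eq_bigr => V _; rewrite !tscaleDl.
by rewrite addrACA.
Qed.

Lemma inJZ c x : J x -> J (tscale c x).
Proof.
move=> [c1 [d1 ->]]; exists (fun V => c * c1 V), (fun V => c * d1 V).
by rewrite tscale_sumr; apply: eq_bigr => V _; rewrite tscaleDr !tscaleA.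
Qed.

Lemma inJN x : J x -> J (- x).
Proof.
move=> h; have := inJZ (-1) h.
suff -> : tscale (-1) x = - x by [].
by rewrite tscaleN tscale1.
Qed.

Lemma inJ_sum I (r : seq I) (Q : pred I) (F : I -> T) :
  (forall i, Q i -> J (F i)) -> J (\sum_(i <- r | Q i) F i).
Proof.
move=> h; elim/big_rec: _ => [|i x Qi Jx]; first exact: inJ0.
by apply: inJD => //; apply: h.
Qed.

Lemma inJ_tb V : V \in Aplus A -> J (tb V).
Proof.
move=> hV; exists (fun U => (U == V)%:R), (fun _ => 0).
rewrite (bigD1 V) //= big1 ?addr0.
  by rewrite eqxx tscale1 tscale0l addr0.
by move=> U /andP[_ /negPf ->]; rewrite !tscale0l addr0.
Qed.

Lemma inJ_db V : V \in Aplus A -> J (db V).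
Proof.
move=> hV; exists (fun _ => 0), (fun U => (U == V)%:R).
rewrite (bigD1 V) //= big1 ?addr0.
  by rewrite eqxx tscale1 tscale0l add0r tdiff_basis.
by move=> U /andP[_ /negPf ->]; rewrite !tscale0l addr0.
Qed.

Lemma inJ_tdiff x : J x -> J (tdiff g x).
Proof.
move=> [c [d ->]]; rewrite tdiff_sum; apply: inJ_sum => V hV.
rewrite tdiffD !tdiffZ !tdiff_basis ddb tscale0r addr0.
by apply: inJZ; apply: inJ_db.
Qed.

Lemma inJ_ep_r V W : W \in Aplus A -> J (ep V W).
Proof.
move=> hW; case: (boolP [disjoint V & W]) => d; last by rewrite ep0 //; apply: inJ0.
rewrite epE //; apply: inJZ; apply: inJ_tb; apply: up hW _; exact: subsetUr.
Qed.

Lemma inJ_ep_l V W : V \in Aplus A -> J (ep V W).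
Proof.
move=> hV; case: (boolP [disjoint V & W]) => d; last by rewrite ep0 //; apply: inJ0.
rewrite epE //; apply: inJZ; apply: inJ_tb; apply: up hV _; exact: subsetUl.
Qed.

Lemma La t V : V \in Aplus A -> J (tmul g t (tb V)).
Proof.
move=> hV; rewrite tmul_basisr; apply: inJ_sum => W _; apply: inJZ; exact: inJ_ep_r.
Qed.

Lemma Lb t V : V \in Aplus A -> J (tmul g (tb V) t).
Proof.
move=> hV; rewrite tmul_basisl; apply: inJ_sum => W _; apply: inJZ; exact: inJ_ep_l.
Qed.

Lemma sign_sq k (x : T) : tscale ((-1) ^+ k) (tscale ((-1) ^+ k) x) = x.
Proof.
by rewrite tscaleA -exprD -signr_odd addnn odd_double expr0 tscale1.
Qed.

Lemma Lc t V : V \in Aplus A -> J (tmul g t (db V)).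
Proof.
move=> hV; rewrite (decomp t) tmul_suml; apply: inJ_sum => W _; rewrite tmulZl.
apply: inJZ.
have -> : tmul g (tb W) (db V) =
    tscale ((-1) ^+ #|W|) (tdiff g (ep W V) - tmul g (db W) (tb V)).
  by rewrite leib addrC addKr sign_sq.
apply: inJZ; apply: inJD; first by apply: inJ_tdiff; apply: inJ_ep_r.
by apply: inJN; apply: La.
Qed.

Lemma Ld t V : V \in Aplus A -> J (tmul g (db V) t).
Proof.
move=> hV; rewrite (decomp t) tmul_sumr; apply: inJ_sum => W _; rewrite tmulZr.
apply: inJZ.
have -> : tmul g (db V) (tb W) =
    tdiff g (ep V W) - tscale ((-1) ^+ #|V|) (tmul g (tb V) (db W)).
  by rewrite leib addrK.
apply: inJD; first by apply: inJ_tdiff; apply: inJ_ep_l.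
by apply: inJN; apply: inJZ; apply: Lb.
Qed.

Lemma ideal t x : J x -> J (tmul g t x) /\ J (tmul g x t).
Proof.
move=> [c [d ->]]; split.
  rewrite tmul_sumr; apply: inJ_sum => V hV; rewrite tmulDr !tmulZr tdiff_basis.
  by apply: inJD; apply: inJZ; [apply: La | apply: Lc].
rewrite tmul_suml; apply: inJ_sum => V hV; rewrite tmulDl !tmulZl tdiff_basis.
by apply: inJD; apply: inJZ; [apply: Lb | apply: Ld].
Qed.

End Ideal.

Lemma tmulNl (x y : T) : tmul g (- x) y = - tmul g x y.
Proof. by apply/eqP; rewrite -subr_eq0 opprK -tmulDl addNr tmul0l. Qed.
Lemma tmulNr (x y : T) : tmul g y (- x) = - tmul g y x.
Proof. by apply/eqP; rewrite -subr_eq0 opprK -tmulDr addNr tmul0r. Qed.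

End Work.


Theorem mainTheorem1 (R : fieldType) (n m : nat) (g : 'I_m -> 'X_{1..n})
  (A : {set {set 'I_m} * {set 'I_m}}) :
  injective g ->
  minimal_gens g ->
  morse_matching g A ->
  (forall V W : {set 'I_m}, V \in Aplus A -> V \subset W -> W \in Aplus A) ->
  (* J is a subcomplex ... *)
  (forall x : Tay R n m, inJ g A x -> inJ g A (tdiff g x)) /\
  (* ... and a (two-sided) ideal for Gemeda's product: T J and J T inside J *)
  (forall t x : Tay R n m, inJ g A x ->
     inJ g A (tmul g t x) /\ inJ g A (tmul g x t)) /\
  (* consequently the dg operations descend to T/J *)
  (forall a a' b b' : Tay R n m, inJ g A (a - a')%R -> inJ g A (b - b')%R ->
     inJ g A (tmul g a b - tmul g a' b')%R /\ inJ g A (tdiff g a - tdiff g a')%R).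
Proof.
move=> _ _ _ up.
split; first exact: inJ_tdiff.
split; first by move=> t x; apply: ideal.
move=> a a' b b' ha hb; split; last by rewrite -tdiffB; apply: inJ_tdiff.
have -> : tmul g a b - tmul g a' b' = tmul g (a - a') b + tmul g a' (b - b').
  by rewrite tmulDl tmulDr tmulNl tmulNr addrA addrNK.
apply: inJD; first by case: (ideal up b ha).
by case: (ideal up a' hb).
Qed.
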